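(* For every 2-coloring of the edges of $K_{\mathbb{N},\mathbb{N}}$, the vertex set can be partitioned into a finite set and at most two monochromatic paths (each path finite or one-way infinite, each monochromatic in some color).
   Context: $K_{\mathbb{N},\mathbb{N}}$ is the complete bipartite graph on $\mathbb{N}$ whose parts are the even and the odd positive integers. A monochromatic path is a path all of whose edges have the same color. *)

(* Defs.v *)
From mathcomp Require Import all_boot.
Set Implicit Arguments. Unset Strict Implicit. Unset Printing Implicit Defensive.

(* Vertices of K_{N,N} are the positive integers; parts = evens and odds.
   Two vertices are adjacent iff they have different parity. *)
Definition vtx (v : nat) : Prop := 0 < v.
Definition adj (u v : nat) : bool := odd u != odd v.

(* A 2-colouring of the edges: a symmetric c : nat -> nat -> bool; the colour
   of the edge {u,v} is c u v (values on non-edges are irrelevant). *)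
Definition colouring (c : nat -> nat -> bool) : Prop := forall u v, c u v = c v u.

Definition mono_fin_path (c : nat -> nat -> bool) (b : bool) (s : seq nat) : Prop :=
  uniq s /\ (forall v, v \in s -> vtx v) /\
  forall i, i.+1 < size s ->
    adj (nth 0 s i) (nth 0 s i.+1) /\ c (nth 0 s i) (nth 0 s i.+1) = b.

Definition mono_inf_path (c : nat -> nat -> bool) (b : bool) (f : nat -> nat) : Prop :=
  injective f /\ (forall i, vtx (f i)) /\
  forall i, adj (f i) (f i.+1) /\ c (f i) (f i.+1) = b.

Definition mono_path_set (c : nat -> nat -> bool) (P : nat -> Prop) : Prop :=
  exists b : bool,
    (exists s, mono_fin_path c b s /\ forall v, P v <-> v \in s) \/
    (exists f, mono_inf_path c b f /\ forall v, P v <-> exists i, f i = v).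

(* Main.v *)
Require Import Defs.
From mathcomp Require Import all_boot.
From mathcomp Require Import boolp classical_sets filter.
Set Implicit Arguments. Unset Strict Implicit. Unset Printing Implicit Defensive.

Definition erel (c : nat -> nat -> bool) (k : bool) : rel nat :=
  fun x y => adj x y && (c x y == k).

Lemma uniq_catP (A B : seq nat) :
  uniq (A ++ B) <-> [/\ uniq A, uniq B & forall x, x \in B -> x \notin A].
Proof.
rewrite cat_uniq; split.
- by case/and3P => -> /hasPn H ->.
- by case=> -> -> H; rewrite /= andbT; apply/hasPn.
Qed.

Lemma prefix_le (Q : nat -> seq nat) :
  (forall n, exists s, Q n.+1 = Q n ++ s) ->
  forall m n, m <= n -> exists s, Q n = Q m ++ s.
Proof.
move=> H m n /subnK <-; elim: (n - m) => [|k [s IH]]; first by exists [::]; rewrite cats0.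
have [t Ht] := H (k + m); exists (s ++ t); by rewrite addSn Ht IH catA.
Qed.

Lemma chain_path c k (Q : nat -> seq nat) :
  (forall n, exists s, Q n.+1 = Q n ++ s) ->
  (forall n, [/\ uniq (Q n), sorted (erel c k) (Q n) & forall x, x \in Q n -> vtx x]) ->
  mono_path_set c (fun v => exists n, v \in Q n).
Proof.
move=> Hs Hinv; have Hp := prefix_le Hs.
have memle : forall m n v, m <= n -> v \in Q m -> v \in Q n.
  by move=> m n v /Hp [s ->]; rewrite mem_cat => ->.
have nthle : forall m n i, m <= n -> i < size (Q m) -> nth 0 (Q n) i = nth 0 (Q m) i.
  by move=> m n i /Hp [s ->] Hi; rewrite nth_cat Hi.
exists k.
case: (pselect (forall j, exists n, j < size (Q n))) => [Hunb|Hb].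
- right.
  pose g j := xchoose (Hunb j).
  have Hg : forall j, j < size (Q (g j)) by move=> j; exact: (xchooseP (Hunb j)).
  have Hall : forall n j, j < size (Q n) -> nth 0 (Q n) j = nth 0 (Q (g j)) j.
    move=> n j Hj; case: (leqP n (g j)) => Hn.
      by rewrite (nthle _ _ _ Hn Hj).
    by rewrite (nthle _ _ _ (ltnW Hn) (Hg j)).
  exists (fun j => nth 0 (Q (g j)) j); split; first split; [|split|].
  + move=> i j /= Hij.
    have Hi : i < size (Q (g i + g j)).
      by have [s ->] := Hp _ (g i + g j) (leq_addr (g j) (g i)); rewrite size_cat ltn_addr.
    have Hj : j < size (Q (g i + g j)).
      by have [s ->] := Hp _ (g i + g j) (leq_addl (g i) (g j)); rewrite size_cat ltn_addr.
    have [Hu _ _] := Hinv (g i + g j).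
    apply/eqP; rewrite -(nth_uniq 0 Hi Hj Hu).
    by rewrite (Hall _ _ Hi) (Hall _ _ Hj) Hij.
  + move=> i; have [_ _ Hv] := Hinv (g i); apply: Hv; exact: mem_nth.
  + move=> i; have [_ Hso _] := Hinv (g i.+1).
    have Hi1 := Hg i.+1.
    have := (sortedP 0 Hso) i Hi1; rewrite /erel (Hall _ _ (ltnW Hi1)).
    by case/andP => -> /eqP ->.
  + move=> v; split.
    * move=> [n Hn]; exists (index v (Q n)).
      have Hi : index v (Q n) < size (Q n) by rewrite index_mem.
      by rewrite -(Hall _ _ Hi) nth_index.
    * move=> [i <-]; exists (g i); exact: mem_nth.
- left.
  have [N HN] : exists N, forall n, size (Q n) <= size (Q N).
    have [K HK] : exists K, forall n, size (Q n) <= K.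
      apply: contrapT => HK; apply: Hb => j; apply: contrapT => Hj; apply: HK.
      exists j => n; rewrite leqNgt; apply/negP => Hn; apply: Hj; by exists n.
    elim: K HK => [|K IH] HK.
      by exists 0 => n; rewrite (leq_trans (HK n)).
    case: (pselect (forall n, size (Q n) <= K)) => [/IH //|HnK].
    have [n0 Hn0] : exists n0, ~ (size (Q n0) <= K).
      by apply: contrapT => H; apply: HnK => n; apply: contrapT => Hn; apply: H; exists n.
    exists n0 => n; apply: (leq_trans (HK n)); by rewrite ltnNge; apply/negP.
  have memN : forall n v, v \in Q n -> v \in Q N.
    move=> n v; case: (leqP n N) => Hn; first exact: memle.
    have [s Hs'] := Hp _ _ (ltnW Hn).
    have : size s = 0.
      have := HN n; rewrite Hs' size_cat => H; apply/eqP; rewrite -(leqn0) -(leq_add2l (size (Q N))) addn0 //.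
    by move/size0nil => Hs0; rewrite Hs' Hs0 cats0.
  exists (Q N); split.
  + have [Hu Hso Hv] := Hinv N; split; [exact: Hu|split; [exact: Hv|]].
    move=> i Hi; have := (sortedP 0 Hso) i Hi; by case/andP => -> /eqP ->.
  + move=> v; split; [case=> n; exact: memN| move=> H; by exists N].
Qed.

Lemma exU : exists U : (nat -> Prop) -> Prop,
  [/\ (forall S T, U S -> U T -> U (fun x => S x /\ T x)),
      (forall S T : nat -> Prop, (forall x, S x -> T x) -> U S -> U T),
      (forall S, U S \/ U (fun x => ~ S x)),
      (forall N, U (fun x => (N <= x)%N)) &
      ~ U (fun _ => False)].
Proof.
have [G [UG sub]] := ultraFilterLemma (@eventually_filter).
exists G; split.
- move=> S T GS GT; exact: (filterI GS GT).
- move=> S T ST GS; exact: (filterS ST GS).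
- move=> S; exact: (in_ultra_setVsetC S UG).
- move=> N; apply: sub; exists N => //.
- exact: (@filter_not_empty _ G _).
Qed.

Definition Concl c := exists (F : seq nat) (P1 P2 : nat -> Prop),
    mono_path_set c P1 /\ mono_path_set c P2 /\
    (forall v, vtx v <-> [\/ v \in F, P1 v | P2 v]) /\
    (forall v, ~ (v \in F /\ P1 v)) /\
    (forall v, ~ (v \in F /\ P2 v)) /\
    (forall v, ~ (P1 v /\ P2 v)).

Section Framework.
Variables (c : nat -> nat -> bool) (k1 k2 : bool) (F : seq nat)
  (T1 T2 E1 E2 : nat -> Prop).

Definition GG x := T1 x \/ T2 x.

Definition ext_spec k (E : nat -> Prop) (X : seq nat) e v s :=
  [/\ uniq s, (forall x, x \in s -> x \notin X /\ GG x), v \in s,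
      path (erel c k) e s & E (last e s)].

Definition extf k E X e v : seq nat :=
  if pselect (exists s, ext_spec k E X e v s) is left H then sval (cid H) else [::].

Lemma extfP k E X e v : (exists s, ext_spec k E X e v s) -> ext_spec k E X e v (extf k E X e v).
Proof. rewrite /extf => H; case: (pselect _) => [H'|//]; exact: (svalP (cid H')). Qed.

Definition startf (E : nat -> Prop) (X : seq nat) : nat :=
  if pselect (exists e, [/\ E e, e \notin X & GG e]) is left H then sval (cid H) else 0.

Lemma startfP E X : (exists e, [/\ E e, e \notin X & GG e]) ->
  [/\ E (startf E X), startf E X \notin X & GG (startf E X)].
Proof. rewrite /startf => H; case: (pselect _) => [H'|//]; exact: (svalP (cid H')). Qed.

Definition extend k E (Q Qo : seq nat) n : seq nat :=
  match Q with
  | [::] => let e := startf E (n :: Qo) in e :: extf k E (e :: Qo) e n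
  | h :: t => Q ++ extf k E (Q ++ Qo) (last h t) n
  end.

Definition lastE (E : nat -> Prop) (Q : seq nat) := if Q is h :: t then E (last h t) else True.

Lemma extendP k (T E : nat -> Prop) :
  (forall (X : seq nat) e v, E e -> T v -> v \notin X -> exists s, ext_spec k E X e v s) ->
  (forall (X : seq nat) v, T v -> exists e, [/\ E e, e \notin X & GG e]) ->
  forall Q Qo n, uniq (Q ++ Qo) -> (forall x, x \in Q ++ Qo -> GG x) ->
   sorted (erel c k) Q -> lastE E Q -> T n -> n \notin Q ++ Qo ->
   [/\ exists s, extend k E Q Qo n = Q ++ s, uniq (extend k E Q Qo n ++ Qo),
       (forall x, x \in extend k E Q Qo n ++ Qo -> GG x),
       sorted (erel c k) (extend k E Q Qo n) &
       lastE E (extend k E Q Qo n) /\ n \in extend k E Q Qo n].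
Proof.
move=> hL hS [|h t] Qo n Hu HG Hso HE Hn Hnin.
- have [He1 He2 He3] := startfP (hS (n :: Qo) n Hn).
  set e := startf E (n :: Qo) in He1 He2 He3 *.
  have Hn' : n \notin e :: Qo.
    rewrite inE negb_or; move: He2; rewrite inE negb_or => /andP [H1 _].
    by rewrite eq_sym H1.
  have [s1 s2 s3 s4 s5] := extfP (hL (e :: Qo) e n He1 Hn Hn').
  set s := extf k E (e :: Qo) e n in s1 s2 s3 s4 s5 *.
  rewrite /extend -/e -/s; split.
  + by exists (e :: s).
  + rewrite /= ; apply/andP; split.
      rewrite mem_cat negb_or; apply/andP; split.
        by apply/negP => /s2 [] ; rewrite inE eqxx.
      by move: He2; rewrite inE negb_or => /andP [].
    apply/uniq_catP; split => //.
    by move=> x Hx; apply/negP => /s2 []; rewrite inE Hx orbT.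
  + move=> x; rewrite /= inE mem_cat => /orP [/eqP ->//|/orP [/s2 [] //|]].
    by move=> Hx; apply: HG.
  + exact: s4.
  + split; first exact: s5.
    by rewrite inE s3 orbT.
- have Hnin' : n \notin (h :: t) ++ Qo by [].
  have [s1 s2 s3 s4 s5] := extfP (hL _ _ n HE Hn Hnin').
  set s := extf k E _ _ n in s1 s2 s3 s4 s5 *.
  have -> : extend k E (h :: t) Qo n = (h :: t) ++ s by [].
  move: Hso HE Hu HG Hnin Hnin'; set Q := h :: t => Hso HE Hu HG Hnin Hnin'.
  split.
  + by exists s.
  + rewrite -catA. apply/uniq_catP; split.
    * by move/uniq_catP: Hu => [].
    * apply/uniq_catP; split => //; first by move/uniq_catP: Hu => [].
      by move=> x Hx; apply/negP => /s2 []; rewrite mem_cat Hx orbT.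
    * move=> x; rewrite mem_cat => /orP [/s2 []|]; first by rewrite mem_cat negb_or => /andP [].
      by move: Hu; move/uniq_catP => [_ _ H] /H.
  + move=> x; rewrite -catA mem_cat mem_cat => /orP [Hx|/orP [/s2 [] //|Hx]];
    by apply: HG; rewrite mem_cat Hx ?orbT.
  + by rewrite /Q /= cat_path; apply/andP; split.
  + split; first by rewrite /Q /= last_cat.
    by rewrite mem_cat s3 orbT.
Qed.


Definition step n (Q : seq nat * seq nat) : seq nat * seq nat :=
  let: (Q1, Q2) := Q in
  if n \in Q1 ++ Q2 then (Q1, Q2) else
  if pselect (T1 n) then (extend k1 E1 Q1 Q2 n, Q2) else
  if pselect (T2 n) then (Q1, extend k2 E2 Q2 Q1 n) else (Q1, Q2).

Fixpoint stage n := if n is n'.+1 then step n' (stage n') else ([::], [::]).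

Definition Inv (Q : seq nat * seq nat) :=
  [/\ uniq (Q.1 ++ Q.2), forall x, x \in Q.1 ++ Q.2 -> GG x,
      sorted (erel c k1) Q.1, sorted (erel c k2) Q.2 & lastE E1 Q.1 /\ lastE E2 Q.2].

Lemma mem_catC (A B : seq nat) x : (x \in A ++ B) = (x \in B ++ A).
Proof. by rewrite !mem_cat orbC. Qed.

Lemma framework :
  (forall v, v \in F -> vtx v) ->
  (forall v, vtx v -> [\/ v \in F, T1 v | T2 v]) ->
  (forall v, GG v -> vtx v /\ v \notin F) ->
  (forall v, T1 v -> T2 v -> False) ->
  (forall (X : seq nat) e v, E1 e -> T1 v -> v \notin X -> exists s, ext_spec k1 E1 X e v s) ->
  (forall (X : seq nat) v, T1 v -> exists e, [/\ E1 e, e \notin X & GG e]) ->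
  (forall (X : seq nat) e v, E2 e -> T2 v -> v \notin X -> exists s, ext_spec k2 E2 X e v s) ->
  (forall (X : seq nat) v, T2 v -> exists e, [/\ E2 e, e \notin X & GG e]) ->
  exists (F' : seq nat) (P1 P2 : nat -> Prop),
    mono_path_set c P1 /\ mono_path_set c P2 /\
    (forall v, vtx v <-> [\/ v \in F', P1 v | P2 v]) /\
    (forall v, ~ (v \in F' /\ P1 v)) /\
    (forall v, ~ (v \in F' /\ P2 v)) /\
    (forall v, ~ (P1 v /\ P2 v)).
Proof.
move=> hF hcov hG h12 hL1 hS1 hL2 hS2.
have Hstep : forall n Q, Inv Q ->
  [/\ Inv (step n Q), exists s, (step n Q).1 = Q.1 ++ s, exists s, (step n Q).2 = Q.2 ++ s
    & vtx n -> n \notin F -> n \in (step n Q).1 ++ (step n Q).2].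
  move=> n [Q1 Q2] [Hu HG Hs1 Hs2 [HE1 HE2]] /=.
  case: ifP => Hin.
    split => //; [by exists [::]; rewrite cats0|by exists [::]; rewrite cats0].
  case: (pselect (T1 n)) => Hn1.
    have [[s Hs] Hu' HG' Hs' [HE' Hn']] :=
      extendP hL1 hS1 Hu HG Hs1 HE1 Hn1 (negbT Hin).
    split => //=; [by exists s|by exists [::]; rewrite cats0|by rewrite mem_cat Hn'].
  case: (pselect (T2 n)) => Hn2.
    have Hu2 : uniq (Q2 ++ Q1) by rewrite uniq_catC.
    have HG2 : forall x, x \in Q2 ++ Q1 -> GG x by move=> x; rewrite mem_catC; exact: HG.
    have Hin2 : n \notin Q2 ++ Q1 by rewrite mem_catC Hin.
    have [[s Hs] Hu' HG' Hs' [HE' Hn']] :=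
      extendP hL2 hS2 Hu2 HG2 Hs2 HE2 Hn2 Hin2.
    split => //=.
    * split => //=; [by rewrite uniq_catC| by move=> x; rewrite mem_catC; exact: HG'].
    * by exists [::]; rewrite cats0.
    * by exists s.
    * by rewrite mem_cat Hn' orbT.
  split => //=; [by exists [::]; rewrite cats0|by exists [::]; rewrite cats0|].
  by move=> /hcov [->|//|//].
have Hinv : forall n, Inv (stage n).
  elim=> [|n IH]; first by split.
  by have [] := Hstep n _ IH.
have Hpre1 : forall n, exists s, (stage n.+1).1 = (stage n).1 ++ s.
  by move=> n; have [] := Hstep n _ (Hinv n).
have Hpre2 : forall n, exists s, (stage n.+1).2 = (stage n).2 ++ s.
  by move=> n; have [] := Hstep n _ (Hinv n).
have Hcov : forall n, vtx n -> n \notin F -> n \in (stage n.+1).1 ++ (stage n.+1).2.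
  by move=> n; have [] := Hstep n _ (Hinv n).
have mle1 := prefix_le Hpre1; have mle2 := prefix_le Hpre2.
exists F, (fun v => exists n, v \in (stage n).1), (fun v => exists n, v \in (stage n).2).
split; [|split; [|split; [|split; [|split]]]].
- apply: (@chain_path c k1 _ Hpre1) => n; have [Hu HG Hs1 Hs2 _] := Hinv n.
  split => //; first by move/uniq_catP: Hu => [].
  by move=> x Hx; apply: (proj1 (hG _ (HG x _))); rewrite mem_cat Hx.
- apply: (@chain_path c k2 _ Hpre2) => n; have [Hu HG Hs1 Hs2 _] := Hinv n.
  split => //; first by move/uniq_catP: Hu => [].
  by move=> x Hx; apply: (proj1 (hG _ (HG x _))); rewrite mem_cat Hx orbT.
- move=> v; split.
  + move=> Hv; case: (boolP (v \in F)) => HvF; first by apply: Or31.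
    move: (Hcov v Hv HvF); rewrite mem_cat => /orP [H|H].
      by apply: Or32; exists v.+1.
    by apply: Or33; exists v.+1.
  + case=> [/hF //|[n Hn]|[n Hn]]; have [_ HG _ _ _] := Hinv n;
    apply: (proj1 (hG _ (HG v _))); by rewrite mem_cat Hn ?orbT.
- move=> v [HvF [n Hn]]; have [_ HG _ _ _] := Hinv n.
  have HGv : GG v by apply: HG; rewrite mem_cat Hn.
  by move: (proj2 (hG _ HGv)); rewrite HvF.
- move=> v [HvF [n Hn]]; have [_ HG _ _ _] := Hinv n.
  have HGv : GG v by apply: HG; rewrite mem_cat Hn orbT.
  by move: (proj2 (hG _ HGv)); rewrite HvF.
- move=> v [[m Hm] [n Hn]].
  have [Hu _ _ _ _] := Hinv (m + n).
  have [s1 E1'] := mle1 _ _ (leq_addr n m).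
  have [s2 E2'] := mle2 _ _ (leq_addl m n).
  move/uniq_catP: Hu => [_ _ /(_ v)].
  by rewrite E1' E2' !mem_cat Hm Hn => /(_ isT).
Qed.

End Framework.

Lemma forall_cons (P : nat -> Prop) a (s : seq nat) :
  P a -> (forall x, x \in s -> P x) -> forall x, x \in a :: s -> P x.
Proof. by move=> Ha Hs x; rewrite inE => /orP [/eqP ->|/Hs]. Qed.

Lemma forall_nil (P : nat -> Prop) : forall x, x \in [::] -> P x.
Proof. by []. Qed.

Ltac split_fresh := repeat match goal with
  H : is_true (?x \notin ?a :: ?s) |- _ =>
    rewrite inE negb_or in H; case/andP: H => ? ? end.

Ltac solve_neqs := rewrite /= ?inE ?negb_or ?andbT;
  repeat match goal with |- is_true (_ && _) => apply/andP; split end;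
  try done; try (by rewrite eq_sym).

Lemma mem_sumn (X : seq nat) x : x \in X -> x <= sumn X.
Proof.
elim: X => [//|a X IH]; rewrite inE => /orP [/eqP ->|/IH H] /=; first exact: leq_addr.
exact: (leq_trans H (leq_addl _ _)).
Qed.

Definition emb (p : bool) n := if p then n.*2.+1 else n.*2.+2.
Lemma emb_odd p n : odd (emb p n) = p.
Proof. by case: p => /=; rewrite odd_double. Qed.
Lemma emb_ge p n : n <= emb p n.
Proof. by case: p => /=; rewrite -addnn; [|apply: leqW]; apply: leqW; apply: leq_addr. Qed.

Definition side p v := 0 < v /\ odd v = p.

Lemma erelE c k x y : odd x != odd y -> c x y = k -> erel c k x y.
Proof. by move=> H1 H2; rewrite /erel /adj H1 H2 eqxx. Qed.

Section Combi.
Variables (c : nat -> nat -> bool) (hc : colouring c) (U : (nat -> Prop) -> Prop).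
Hypotheses (UI : forall S T, U S -> U T -> U (fun x => S x /\ T x))
  (US : forall S T : nat -> Prop, (forall x, S x -> T x) -> U S -> U T)
  (UC : forall S, U S \/ U (fun x => ~ S x))
  (Ufin : forall N, U (fun x => N <= x)) (U0 : ~ U (fun _ => False)).

Definition large p (S : nat -> Prop) := U (fun n => S (emb p n)).

Lemma largeI p S T : large p S -> large p T -> large p (fun x => S x /\ T x).
Proof. exact: UI. Qed.
Lemma largeS p (S T : nat -> Prop) : (forall x, side p x -> S x -> T x) -> large p S -> large p T.
Proof.
move=> H; apply: US => n; apply: H; split; last exact: emb_odd.
by case: p => /=.
Qed.
Lemma largeC p S : large p S \/ large p (fun x => ~ S x).
Proof. exact: UC. Qed.

Lemma large_fresh p S (X : seq nat) : large p S -> exists v, [/\ side p v, S v & v \notin X].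
Proof.
move=> H; have := UI H (Ufin (sumn X).+1) => H2.
have [n [Sn Hn]] : exists n, S (emb p n) /\ (sumn X).+1 <= n.
  apply: contrapT => Hne; apply: U0; apply: US H2 => x Hx; apply: Hne; by exists x.
exists (emb p n); split => //.
- split; last exact: emb_odd.
  by rewrite /emb; case: (p).
- apply/negP => /mem_sumn Hx.
  have := leq_trans (leq_trans Hn (emb_ge p n)) Hx; by rewrite ltnn.
Qed.

Lemma large_ne p S : large p S -> ~ large p (fun x => ~ S x).
Proof.
move=> H1 H2; have [v [_ [H3 H4] _]] := large_fresh [::] (largeI H1 H2); exact: H4.
Qed.

Definition big k v := large (~~ odd v) (fun u => c v u = k).

Lemma big_or k v : big k v \/ big (~~ k) v.
Proof.
case: (largeC (~~ odd v) (fun u => c v u = k)) => H; [by left|right].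
by apply: largeS H => x _; case: (c v x); case: k.
Qed.

Lemma big_excl k v : big k v -> big (~~ k) v -> False.
Proof.
move=> H1 H2; apply: (large_ne H1); apply: largeS H2 => x _ ->; by case: (k).
Qed.

Definition lspec k (Q E : nat -> Prop) (X : seq nat) e v s :=
  [/\ uniq s, (forall x, x \in s -> x \notin X /\ Q x), v \in s,
      path (erel c k) e s & E (last e s)].

Lemma oddN x y p : odd x = p -> odd y = ~~ p -> odd x != odd y.
Proof. by move=> -> ->; case: p. Qed.
Lemma oddN' x y p : odd x = ~~ p -> odd y = p -> odd x != odd y.
Proof. by move=> -> ->; case: p. Qed.

Lemma linkII p k : large p (big k) -> forall X e v, side p e -> big k e -> vtx v -> big k v ->
  v \notin X -> exists s, lspec k vtx (fun x => side p x /\ big k x) X e v s.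
Proof.
move=> Hl X e v [He0 He1] Hek Hv Hvk HvX.
have Hek' : large (~~ p) (fun u => c e u = k) by rewrite /big He1 in Hek.
case: (boolP (odd v == p)) => /eqP Hvp.
- have Hvk' : large (~~ p) (fun u => c v u = k) by rewrite /big Hvp in Hvk.
  have [b [[Hb0 Hb1] [Hbe Hbv] HbX]] := large_fresh (v :: X) (largeI Hek' Hvk').
  exists [:: b; v]; split.
  + split_fresh; solve_neqs.
  + apply: forall_cons; [by split_fresh|apply: forall_cons => //].
  + by rewrite !inE eqxx orbT.
  + have Hbv' : c b v = k by rewrite hc.
    by rewrite /= (erelE (oddN He1 Hb1) Hbe) (erelE (oddN' Hb1 Hvp) Hbv').
  + by [].
- have Hvp' : odd v = ~~ p by move: Hvp; case: (odd v); case: (p).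
  have Hvk' : large p (fun u => c v u = k) by rewrite /big Hvp' negbK in Hvk.
  have [a1 [[Ha10 Ha11] [Ha1v Ha1k] Ha1X]] := large_fresh (v :: X) (largeI Hvk' Hl).
  have [a2 [[Ha20 Ha21] [Ha2v Ha2k] Ha2X]] := large_fresh (a1 :: v :: X) (largeI Hvk' Hl).
  have Ha1k' : large (~~ p) (fun u => c a1 u = k) by rewrite /big Ha11 in Ha1k.
  have [b [[Hb0 Hb1] [Hbe Hba1] HbX]] := large_fresh (a2 :: a1 :: v :: X) (largeI Hek' Ha1k').
  exists [:: b; a1; v; a2]; split.
  + split_fresh; solve_neqs.
  + apply: forall_cons; [by split_fresh|].
    apply: forall_cons; [by split_fresh|].
    apply: forall_cons; [by []|].
    by apply: forall_cons; [split_fresh|].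
  + by rewrite !inE eqxx !orbT.
  + have Ha1v' : c a1 v = k by rewrite hc.
    have Hba1' : c b a1 = k by rewrite hc.
    by rewrite /= (erelE (oddN He1 Hb1) Hbe) (erelE (oddN' Hb1 Ha11) Hba1')
      (erelE (oddN Ha11 Hvp') Ha1v') (erelE (oddN' Hvp' Ha21) Ha2v).
  + by [].
Qed.


Lemma lspec_ext k' (Q E : nat -> Prop) (T1' T2' : nat -> Prop) X e v s :
  lspec k' Q E X e v s -> (forall x, Q x -> GG T1' T2' x) -> ext_spec c T1' T2' k' E X e v s.
Proof. by move=> [H1 H2 H3 H4 H5] HQ; split => // x /H2 [H6 H7]; split => //; apply: HQ. Qed.

Definition Inf (S : nat -> Prop) := forall X : seq nat, exists u, S u /\ u \notin X.

Section CaseI.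
Variable k : bool.
Hypotheses (HlA : large true (big k)) (HlB : large false (big k)).

Lemma Hl q : large q (big k).
Proof. by case: q. Qed.

Definition Nk v u := [/\ c v u = k, big k u & side (~~ odd v) u].

Lemma linkI1 X e v : side true e -> big k e -> vtx v -> Inf (Nk v) -> v \notin X ->
  exists s, lspec k (fun x => x = v \/ (vtx x /\ big k x)) (fun x => side true x /\ big k x) X e v s.
Proof.
move=> [He0 He1] Hek Hv HInf HvX.
have Hek' : large false (fun u => c e u = k) by rewrite /big He1 in Hek.
case: (boolP (odd v)) => Hvp.
- have [b1 [[Hb1v Hb1k [Hb10 Hb11]] Hb1X]] := HInf (v :: X).
  have [b2 [[Hb2v Hb2k [Hb20 Hb21]] Hb2X]] := HInf (b1 :: v :: X).
  rewrite Hvp /= in Hb11 Hb21.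
  have [b [[Hb0 Hb1] [Hbe Hbk] HbX]] := large_fresh (b2 :: b1 :: v :: X) (largeI Hek' HlB).
  have Hbk' : large true (fun u => c b u = k) by rewrite /big Hb1 in Hbk.
  have Hb1k' : large true (fun u => c b1 u = k) by rewrite /big Hb11 in Hb1k.
  have Hb2k' : large true (fun u => c b2 u = k) by rewrite /big Hb21 in Hb2k.
  have [a [[Ha0 Ha1] [[Hab Hab1] Hak] HaX]] :=
    large_fresh (b :: b2 :: b1 :: v :: X) (largeI (largeI Hbk' Hb1k') HlA).
  have [a' [[Ha'0 Ha'1] [Ha'b2 Ha'k] Ha'X]] :=
    large_fresh (a :: b :: b2 :: b1 :: v :: X) (largeI Hb2k' HlA).
  exists [:: b; a; b1; v; b2; a']; split.
  + split_fresh; solve_neqs.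
  + apply: forall_cons; [by split_fresh; split => //; right|].
    apply: forall_cons; [by split_fresh; split => //; right|].
    apply: forall_cons; [by split_fresh; split => //; right|].
    apply: forall_cons; [by split; [|left]|].
    apply: forall_cons; [by split_fresh; split => //; right|].
    by apply: forall_cons; [split_fresh; split => //; right|].
  + by rewrite !inE eqxx !orbT.
  + have Hab1' : c a b1 = k by rewrite hc.
    have Hb1v' : c b1 v = k by rewrite hc.
    have o1 : odd e != odd b by rewrite He1 Hb1.
    have o2 : odd b != odd a by rewrite Hb1 Ha1.
    have o3 : odd a != odd b1 by rewrite Ha1 Hb11.
    have o4 : odd b1 != odd v by rewrite Hb11 Hvp.
    have o5 : odd v != odd b2 by rewrite Hb21 Hvp.
    have o6 : odd b2 != odd a' by rewrite Hb21 Ha'1.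
    by rewrite /= (erelE o1 Hbe) (erelE o2 Hab) (erelE o3 Hab1') (erelE o4 Hb1v')
      (erelE o5 Hb2v) (erelE o6 Ha'b2).
  + by [].
- have [a1 [[Ha1v Ha1k [Ha10 Ha11]] Ha1X]] := HInf (v :: X).
  have [a2 [[Ha2v Ha2k [Ha20 Ha21]] Ha2X]] := HInf (a1 :: v :: X).
  rewrite (negbTE Hvp) /= in Ha11 Ha21.
  have Ha1k' : large false (fun u => c a1 u = k) by rewrite /big Ha11 in Ha1k.
  have [b [[Hb0 Hb1] [[Hbe Hba1] Hbk] HbX]] :=
    large_fresh (a2 :: a1 :: v :: X) (largeI (largeI Hek' Ha1k') HlB).
  exists [:: b; a1; v; a2]; split.
  + split_fresh; solve_neqs.
  + apply: forall_cons; [by split_fresh; split => //; right|].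
    apply: forall_cons; [by split_fresh; split => //; right|].
    apply: forall_cons; [by split; [|left]|].
    by apply: forall_cons; [split_fresh; split => //; right|].
  + by rewrite !inE eqxx !orbT.
  + have Hba1' : c b a1 = k by rewrite hc.
    have Ha1v' : c a1 v = k by rewrite hc.
    have o1 : odd e != odd b by rewrite He1 Hb1.
    have o2 : odd b != odd a1 by rewrite Hb1 Ha11.
    have o3 : odd a1 != odd v by rewrite Ha11 (negbTE Hvp).
    have o4 : odd v != odd a2 by rewrite Ha21 (negbTE Hvp).
    by rewrite /= (erelE o1 Hbe) (erelE o2 Hba1') (erelE o3 Ha1v') (erelE o4 Ha2v).
  + by [].
Qed.


Definition Bd v := vtx v /\ ~ Inf (Nk v).

Lemma big_notBd x : big k x -> ~ Bd x.
Proof.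
move=> Hx [_ HI]; apply: HI => X.
have [u [Hs [H1 H2] HX]] := large_fresh X (largeI Hx (Hl (~~ odd x))).
by exists u; split.
Qed.

Lemma Bd_cover v : Bd v -> exists Y : seq nat, forall u, Nk v u -> u \in Y.
Proof.
move=> [_ HI]; apply: contrapT => H; apply: HI => X; apply: contrapT => H2; apply: H.
exists X => u Hu; apply: contrapT => /negP Hn; apply: H2; by exists u.
Qed.

Lemma notk b : b <> k -> b = ~~ k.
Proof. by case: b; case: (k). Qed.

Lemma conn v w (X : seq nat) : Bd v -> Bd w -> odd v = odd w ->
  exists u, [/\ side (~~ odd v) u, big k u, c v u = ~~ k, c w u = ~~ k & u \notin X].
Proof.
move=> Hv Hw Hvw; have [Y1 HY1] := Bd_cover Hv; have [Y2 HY2] := Bd_cover Hw.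
have [u [Hs Hu HX]] := large_fresh (Y1 ++ Y2 ++ X) (Hl (~~ odd v)).
exists u; split => //.
- apply: notk => H; move: HX; by rewrite !mem_cat (HY1 u).
- apply: notk => H; move: HX; rewrite !mem_cat (HY2 u) ?orbT //.
  by split => //; rewrite -Hvw.
- by move: HX; rewrite !mem_cat !negb_or => /and3P [].
Qed.

Variable F : seq nat.
Definition T2 v := Bd v /\ v \notin F.
Definition InfB p := Inf (fun u => Bd u /\ odd u = p).

Definition Q2 x := (vtx x /\ big k x) \/ T2 x.

Lemma link2main (X : seq nat) e v :
  (InfB true -> InfB false -> forall X : seq nat, exists a b,
     [/\ Bd a /\ odd a = true, Bd b /\ odd b = false, c a b = ~~ k & a \notin X /\ b \notin X]) ->
  (forall v, T2 v -> InfB (odd v)) -> T2 e -> T2 v -> v \notin X ->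
  exists s, lspec (~~ k) Q2 T2 X e v s.
Proof.
move=> HB Hsides He Hv HvX.
case: (boolP (odd e == odd v)) => /eqP Hev.
- have [u [[Hu0 Hu1] Hu Heu Hvu HuX]] := conn (v :: X) He.1 Hv.1 Hev.
  exists [:: u; v]; split.
  + split_fresh; solve_neqs.
  + apply: forall_cons; [by split_fresh; split => //; left|].
    by apply: forall_cons; [split => //; right|].
  + by rewrite !inE eqxx orbT.
  + have o1 : odd e != odd u by rewrite Hu1; case: (odd e).
    have o2 : odd u != odd v by rewrite Hu1 -Hev; case: (odd e).
    have Huv : c u v = ~~ k by rewrite hc.
    by rewrite /= (erelE o1 Heu) (erelE o2 Huv).
  + by [].
- have Hve : odd v = ~~ odd e by move: Hev; case: (odd v); case: (odd e).
  have HIe := Hsides e He; have HIv := Hsides v Hv.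
  have [x [y [[Bx Ox] [By Oy] Cxy [Hx Hy]]]] : exists x y,
    [/\ Bd x /\ odd x = odd e, Bd y /\ odd y = odd v, c x y = ~~ k &
        x \notin v :: X ++ F /\ y \notin v :: X ++ F].
    move: HIe HIv; rewrite Hve; case: (odd e) => /= HI1 HI2.
    + have [a [b [Ha Hb Hab Hf]]] := HB HI1 HI2 (v :: X ++ F).
      by exists a, b; split.
    + have [a [b [Ha Hb Hab [Hfa Hfb]]]] := HB HI2 HI1 (v :: X ++ F).
      by exists b, a; split => //; rewrite hc.
  have HxX : x \notin X by move: Hx; rewrite inE mem_cat !negb_or => /and3P [].
  have HxF : x \notin F by move: Hx; rewrite inE mem_cat !negb_or => /and3P [].
  have Hxv : x != v by move: Hx; rewrite inE mem_cat !negb_or => /and3P [].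
  have HyX : y \notin X by move: Hy; rewrite inE mem_cat !negb_or => /and3P [].
  have HyF : y \notin F by move: Hy; rewrite inE mem_cat !negb_or => /and3P [].
  have Hyv : y != v by move: Hy; rewrite inE mem_cat !negb_or => /and3P [].
  clear Hx Hy.
  have Hxy : x != y by apply/eqP => Exy; apply: Hev; rewrite -Ox -Oy Exy.
  have [u1 [[Hu10 Hu11] Hu1 Heu1 Hxu1 Hu1X]] := conn (y :: x :: v :: X) He.1 Bx (esym Ox).
  have [u2 [[Hu20 Hu21] Hu2 Hyu2 Hvu2 Hu2X]] := conn (u1 :: y :: x :: v :: X) By Hv.1 Oy.
  exists [:: u1; x; y; u2; v]; split.
  + split_fresh; solve_neqs.
  + apply: forall_cons; [by split_fresh; split => //; left|].
    apply: forall_cons; [by split => //; right|].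
    apply: forall_cons; [by split => //; right|].
    apply: forall_cons; [by split_fresh; split => //; left|].
    by apply: forall_cons; [split => //; right|].
  + by rewrite !inE eqxx !orbT.
  + have o1 : odd e != odd u1 by rewrite Hu11; case: (odd e).
    have o2 : odd u1 != odd x by rewrite Hu11 Ox; case: (odd e).
    have o3 : odd x != odd y by rewrite Ox Oy Hve; case: (odd e).
    have o4 : odd y != odd u2 by rewrite Hu21; case: (odd y).
    have o5 : odd u2 != odd v by rewrite Hu21 Oy; case: (odd v).
    have Hu1x : c u1 x = ~~ k by rewrite hc.
    have Hu2v : c u2 v = ~~ k by rewrite hc.
    by rewrite /= (erelE o1 Heu1) (erelE o2 Hu1x) (erelE o3 Cxy) (erelE o4 Hyu2) (erelE o5 Hu2v).
  + by [].
Qed.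

Lemma link2D (X : seq nat) e v : InfB true -> InfB false ->
  (forall x y, T2 x -> T2 y -> odd x != odd y -> c x y = k) -> T2 e -> T2 v -> v \notin X ->
  exists s, lspec k Q2 T2 X e v s.
Proof.
move=> HIA HIB Red He Hv HvX.
case: (boolP (odd e == odd v)) => Hev; last first.
- exists [:: v]; split => //.
  + by apply: forall_cons; [split => //; right|].
  + by rewrite inE eqxx.
  + by rewrite /= (erelE Hev (Red _ _ He Hv Hev)).
- have HI : InfB (~~ odd e) by case: (odd e).
  have [w [[Bw Ow] Hw]] := HI (v :: X ++ F).
  have HwX : w \notin X by move: Hw; rewrite inE mem_cat !negb_or => /and3P [].
  have HwF : w \notin F by move: Hw; rewrite inE mem_cat !negb_or => /and3P [].
  have Hwv : w != v by move: Hw; rewrite inE mem_cat !negb_or => /and3P [].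
  have Tw : T2 w by [].
  have o1 : odd e != odd w by rewrite Ow; case: (odd e).
  have o2 : odd w != odd v by rewrite Ow -(eqP Hev); case: (odd e).
  exists [:: w; v]; split.
  + by rewrite /= inE Hwv.
  + apply: forall_cons; [by split => //; right|].
    by apply: forall_cons; [split => //; right|].
  + by rewrite !inE eqxx orbT.
  + by rewrite /= (erelE o1 (Red _ _ He Tw o1)) (erelE o2 (Red _ _ Tw Hv o2)).
  + by [].
Qed.

Definition T1I v := vtx v /\ ~ Bd v.

Lemma caseI_asm k2 : (forall x, x \in F -> Bd x) ->
  (forall (X : seq nat) e v, T2 e -> T2 v -> v \notin X -> exists s, lspec k2 Q2 T2 X e v s) ->
  (forall v, T2 v -> InfB (odd v)) -> Concl c.
Proof.
move=> HF HL2 Hs.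
have Q2G : forall x, Q2 x -> GG T1I T2 x.
  move=> x [[Hx0 Hxk]|Hx]; [left; split => //; exact: big_notBd|by right].
apply: (@framework c k k2 F T1I T2 (fun x => side true x /\ big k x) T2).
- by move=> v /HF [].
- move=> v Hv; case: (boolP (v \in F)) => HvF; first by apply: Or31.
  case: (pselect (Bd v)) => HB; [apply: Or33 | apply: Or32]; by split.
- move=> v [[Hv HB]|[HB HvF]]; split => //; last by case: HB.
  by apply/negP => /HF.
- by move=> v [_ HB] [].
- move=> X e v He [Hv HB] HvX.
  have HI : Inf (Nk v) by apply: contrapT => H; apply: HB.
  have [s Hs'] := linkI1 He.1 He.2 Hv HI HvX.
  exists s; apply: lspec_ext Hs' _ => x [->|[Hx0 Hxk]]; left; split => //.
  exact: big_notBd.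
- move=> X v _; have [e [Hs' He HX]] := large_fresh X HlA.
  exists e; split => //; left; split; [exact: Hs'.1|exact: big_notBd].
- move=> X e v He Hv HvX; have [s Hs'] := HL2 X e v He Hv HvX; exists s; exact: lspec_ext Hs' Q2G.
- move=> X v Hv; have [e [[Be Oe] HeX]] := Hs v Hv (X ++ F).
  move: HeX; rewrite mem_cat negb_or => /andP [HeX HeF].
  by exists e; split => //; right.
Qed.

End CaseI.

Lemma caseII k : large true (big k) -> large false (big (~~ k)) -> Concl c.
Proof.
move=> HlA HlB.
apply: (@framework c k (~~ k) [::] (fun v => vtx v /\ big k v) (fun v => vtx v /\ big (~~ k) v)
  (fun x => side true x /\ big k x) (fun x => side false x /\ big (~~ k) x)).
- by [].
- by move=> v Hv; case: (big_or k v) => H; [apply: Or32|apply: Or33].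
- by move=> v [[Hv _]|[Hv _]].
- by move=> v [_ H1] [_ H2]; exact: (big_excl H1 H2).
- move=> X e v He [Hv Hvk] HvX; have [s Hs] := linkII HlA He.1 He.2 Hv Hvk HvX.
  exists s; apply: lspec_ext Hs _ => x Hx.
  by case: (big_or k x) => H; [left|right].
- move=> X v _; have [e [Hs' He HX]] := large_fresh X HlA.
  by exists e; split => //; left; split => //; exact: Hs'.1.
- move=> X e v He [Hv Hvk] HvX; have [s Hs] := linkII HlB He.1 He.2 Hv Hvk HvX.
  exists s; apply: lspec_ext Hs _ => x Hx.
  by case: (big_or k x) => H; [left|right].
- move=> X v _; have [e [Hs' He HX]] := large_fresh X HlB.
  by exists e; split => //; right; split => //; exact: Hs'.1.
Qed.


Lemma caseI k : large true (big k) -> large false (big k) -> Concl c.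
Proof.
move=> HlA HlB.
have HZ : forall p, exists Z : seq nat, forall v, Bd k v -> odd v = p -> v \in Z \/ InfB k p.
  move=> p; case: (pselect (InfB k p)) => H; first by exists [::] => v _ _; right.
  apply: contrapT => H2; apply: H => X; apply: contrapT => H3; apply: H2.
  exists X => v Bv Ov; left; apply: contrapT => /negP Hn; apply: H3; by exists v.
have [ZA HZA] := HZ true; have [ZB HZB] := HZ false.
pose Bridge := forall X : seq nat, exists a b,
     [/\ Bd k a /\ odd a = true, Bd k b /\ odd b = false, c a b = ~~ k & a \notin X /\ b \notin X].
case: (pselect (InfB k true /\ InfB k false /\ ~ Bridge)) => [[HIA [HIB HnB]]|Hcase].
- have [X0 HX0] : exists X0 : seq nat, forall a b, Bd k a -> odd a = true -> Bd k b -> odd b = false ->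
      a \notin X0 -> b \notin X0 -> c a b = k.
    apply: contrapT => H; apply: HnB => X; apply: contrapT => H2; apply: H.
    exists X => a b Ba Oa Bb Ob HaX HbX; apply: contrapT => Hab; apply: H2.
    exists a, b; split => //; move: Hab; by case: (c a b); case: (k).
  pose F := [seq x <- X0 | `[< Bd k x >]].
  have HF : forall x, x \in F -> Bd k x by move=> x; rewrite mem_filter => /andP [/asboolP].
  have HT : forall x, T2 k F x -> x \notin X0.
    move=> x [Bx HxF]; apply/negP => Hx; move: HxF; rewrite mem_filter Hx andbT.
    by move/negP; apply; apply/asboolP.
  apply: (caseI_asm HlA HlB (F := F) (k2 := k) HF).
  + move=> X e v He Hv HvX; apply: link2D HIA HIB _ He Hv HvX.
    move=> x y Tx Ty Oxy; case Ox: (odd x) in Oxy.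
    * apply: HX0 => //; [exact: Tx.1|exact: Ty.1| |exact: HT|exact: HT].
      by move: Oxy; case: (odd y).
    * rewrite hc; apply: HX0 => //; [exact: Ty.1|by move: Oxy; case: (odd y)|exact: Tx.1|exact: HT|exact: HT].
  + by move=> v _; case: (odd v).
- pose F := [seq x <- ZA ++ ZB | `[< Bd k x >]].
  have HF : forall x, x \in F -> Bd k x by move=> x; rewrite mem_filter => /andP [/asboolP].
  apply: (caseI_asm HlA HlB (F := F) (k2 := ~~ k) HF).
  + move=> X e v He Hv HvX; apply: (@link2main k HlA HlB F X e v) => //.
    * move=> HIA HIB; apply: contrapT => HnB; apply: Hcase; by split.
    * move=> w [Bw HwF]; case Ow: (odd w).
      - have [H|//] := HZA w Bw Ow.
        by move: HwF; rewrite mem_filter mem_cat H /= andbT => /negP; case; apply/asboolP.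
      - have [H|//] := HZB w Bw Ow.
        by move: HwF; rewrite mem_filter mem_cat H orbT andbT => /negP; case; apply/asboolP.
  + move=> w [Bw HwF]; case Ow: (odd w).
    - have [H|//] := HZA w Bw Ow.
      by move: HwF; rewrite mem_filter mem_cat H /= andbT => /negP; case; apply/asboolP.
    - have [H|//] := HZB w Bw Ow.
      by move: HwF; rewrite mem_filter mem_cat H orbT andbT => /negP; case; apply/asboolP.
Qed.

End Combi.

Theorem mainTheorem7 (c : nat -> nat -> bool) (hc : colouring c) :
  exists (F : seq nat) (P1 P2 : nat -> Prop),
    mono_path_set c P1 /\ mono_path_set c P2 /\
    (forall v, vtx v <-> [\/ v \in F, P1 v | P2 v]) /\
    (forall v, ~ (v \in F /\ P1 v)) /\
    (forall v, ~ (v \in F /\ P2 v)) /\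
    (forall v, ~ (P1 v /\ P2 v)).
Proof.
have [U [UI US UC Ufin U0]] := exU.
have [k Hk] : exists k, large U true (big c U k).
  case: (largeC UC true (big c U true)) => H; first by exists true.
  exists false; apply: (largeS US _ H) => x _ Hx.
  by case: (big_or c US UC true x).
case: (largeC UC false (big c U k)) => H.
- exact: (caseI hc UI US Ufin U0 Hk H).
- apply: (caseII hc UI US UC Ufin U0 Hk); apply: (largeS US _ H) => x _ Hx.
  by case: (big_or c US UC k x).
Qed.
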